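(* Let $A$ be a strongly AUF algebra, let $M\in\mathrm{Coh}_{\mathrm L}(A)$ be a projective generator of $\mathrm{Coh}_{\mathrm L}(A)$, and let $B=\mathrm{End}_{A,-}(M)^{\mathrm{op}}$, so that $M$ is an $A$-$B$ bimodule. Then $M$ has a left coordinate system and a right coordinate system. Moreover, the map $$\mathrm{SLF}(A)\to\mathrm{SLF}(B),\qquad \psi\mapsto {}^{\psi}\mathrm{Tr}$$ is a linear isomorphism, whose inverse is $$\mathrm{SLF}(B)\to\mathrm{SLF}(A),\qquad \phi\mapsto \mathrm{Tr}^{\phi},$$ where both pseudotraces are taken with respect to the $A$-$B$ bimodule $M$.
   Context: All algebras are associative $\mathbb C$-algebras, not necessarily unital. An idempotent is an element $e$ with $e^2=e$. An algebra $A$ is AUF if there is a family $(e_i)_{i\in\mathfrak I}$ of mutually orthogonal idempotents ($e_ie_j=0$ for $i\neq j$) with $\dim e_iAe_j<\infty$ for all $i,j$ and $A=\sum_{i,j\in\mathfrak I}e_iAe_j$ (every element is a finite sum of elements of the spaces $e_iAe_j$). A left $A$-module $M$ is quasicoherent if $\xi\in A\xi$ for all $\xi\in M$; it is coherent if it is quasicoherent and finitely generated; $\mathrm{Coh}_{\mathrm L}(A)$ is the category of coherent left $A$-modules. A left module is irreducible if it is nonzero and has no nonzero proper submodules. An idempotent $e\in A$ is generating if every irreducible quasicoherent left $A$-module is a quotient of $Ae$. An AUF algebra is strongly AUF if it has a generating idempotent. A projective generator of $\mathrm{Coh}_{\mathrm L}(A)$ is an $M\in \mathrm{Coh}_{\mathrm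 L}(A)$ that is projective as a left $A$-module and such that every $N\in\mathrm{Coh}_{\mathrm L}(A)$ is a quotient of $M^{\oplus n}$ for some $n\ge1$. $\mathrm{Hom}_{A,-}$ denotes left $A$-module maps, $\mathrm{Hom}_{-,B}$ right $B$-module maps; $B=\mathrm{End}_{A,-}(M)^{\mathrm{op}}$ acts on $M$ on the right by $\xi\cdot T=T(\xi)$; for $y\in B$ write $y^{\mathrm{op}}$ for the corresponding map $\xi\mapsto \xi y$ in $\mathrm{End}_{A,-}(M)$. For an algebra $C$, $\mathrm{SLF}(C)$ is the space of linear maps $\phi:C\to\mathbb C$ with $\phi(xy)=\phi(yx)$ for all $x,y$. Left coordinate system (for algebras $A$, $B$ with $B$ unital, and an $A$-$B$ bimodule $M$): a family $\alpha_i\in\mathrm{Hom}_{-,B}(B,M)$, $\check\alpha^i\in\mathrm{Hom}_{-,B}(M,B)$, $i\in I$, such that (a) for each $\xi\in M$, $\check\alpha^i(\xi)=0$ for all but finitely many $i$ and $\sum_i\alpha_i\check\alpha^i(\xi)=\xi$; (b) for each $x\in A$ (acting on $M$), $x\circ\alpha_i=0$ and $\check\alpha^i\circ x=0$ for all but finitely many $i$. The left pseudotrace of $\phi\in\mathrm{SLF}(B)$ is $\mathrm{Tr}^\phi(x)=\sum_i\phi\big(\check\alpha^i(x\,\alpha_i(1_B))\big)$ for $x\in A$; it is a well-defined element of $\mathrm{SLF}(A)$ independent of the left coordinate system. Right coordinate system (for $A$ AUF, $B$ unital, $M$ an $A$-$B$ bimodule that is coherent as a left $A$-module): an idempotent $e\in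 A$ and a finite family $\beta_j\in\mathrm{Hom}_{A,-}(Ae,M)$, $\check\beta^j\in\mathrm{Hom}_{A,-}(M,Ae)$ with $\sum_j\beta_j\circ\check\beta^j=\mathrm{id}_M$. The right pseudotrace of $\psi\in\mathrm{SLF}(A)$ is ${}^\psi\mathrm{Tr}(y)=\sum_j\psi\big(\check\beta^j(\beta_j(e)\,y)\big)$ for $y\in B$ (note $\check\beta^j(\beta_j(e)y)\in eAe$); it is a well-defined element of $\mathrm{SLF}(B)$ independent of the right coordinate system. *)

(* Defs.v *)
(* The base field is C := R[i] (= complex R) for R : realType,
   i.e. the complex numbers.  All notions are defined generically over a field K. *)
From HB Require Import structures.
From mathcomp Require Import all_boot all_order all_algebra.
From mathcomp Require Import reals complex.
From Stdlib Require Import ClassicalEpsilon.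
Set Implicit Arguments. Unset Strict Implicit. Unset Printing Implicit Defensive.
Import Order.TTheory GRing.Theory Num.Theory.
Local Open Scope ring_scope.

Section Defs.
Variable K : fieldType.

Record nuAlg := NuAlg {
  nua_sort :> lmodType K;
  nua_mul : nua_sort -> nua_sort -> nua_sort;
  nua_mulA : forall x y z, nua_mul x (nua_mul y z) = nua_mul (nua_mul x y) z;
  nua_mulDl : forall x y z, nua_mul (x + y) z = nua_mul x z + nua_mul y z;
  nua_mulDr : forall x y z, nua_mul x (y + z) = nua_mul x y + nua_mul x z;
  nua_mulZl : forall (c : K) x y, nua_mul (c *: x) y = c *: nua_mul x y;
  nua_mulZr : forall (c : K) x y, nua_mul x (c *: y) = c *: nua_mul x y }.

Record lmod (A : nuAlg) := LMod {
  lm_sort :> lmodType K;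
  lm_act : A -> lm_sort -> lm_sort;
  lm_actA : forall x y m, lm_act (nua_mul x y) m = lm_act x (lm_act y m);
  lm_actDl : forall x y m, lm_act (x + y) m = lm_act x m + lm_act y m;
  lm_actDr : forall x m n, lm_act x (m + n) = lm_act x m + lm_act x n;
  lm_actZl : forall (c : K) x m, lm_act (c *: x) m = c *: lm_act x m;
  lm_actZr : forall (c : K) x m, lm_act x (c *: m) = c *: lm_act x m }.

Definition is_linear (U V : lmodType K) (f : U -> V) : Prop :=
  forall (c : K) u v, f (c *: u + v) = c *: f u + f v.
Definition is_linform (U : lmodType K) (f : U -> K) : Prop :=
  forall (c : K) u v, f (c *: u + v) = c * f u + f v.

Definition cofinitely (I : eqType) (P : I -> Prop) : Prop :=
  exists s : seq I, forall i, i \notin s -> P i.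

(* Sum of a finitely supported family (meaningful when the support is finite:
   then it is the sum over any duplicate-free list containing the support). *)
Definition fsum (I : eqType) (V : nmodType) (F : I -> V) : V :=
  \sum_(i <- epsilon (inhabits [::])
                 (fun s : seq I => uniq s /\ forall i, i \notin s -> F i = 0)) F i.

Section Alg.
Variable A : nuAlg.

Definition idempotent (e : A) : Prop := nua_mul e e = e.

Definition is_hom (M N : lmod A) (f : M -> N) : Prop :=
  is_linear f /\ forall x m, f (lm_act x m) = lm_act x (f m).

Definition quasicoherent (M : lmod A) : Prop :=
  forall m : M, exists x : A, lm_act x m = m.

Definition fin_gen (M : lmod A) : Prop :=
  exists (n : nat) (g : 'I_n -> M), forall m : M,
    exists (c : 'I_n -> K) (x : 'I_n -> A),
      m = \sum_(i < n) (c i *: g i + lm_act (x i) (g i)).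

Definition coherent (M : lmod A) : Prop := quasicoherent M /\ fin_gen M.

Definition submodule (M : lmod A) (P : M -> Prop) : Prop :=
  [/\ P 0, (forall m n, P m -> P n -> P (m + n)),
      (forall (c : K) m, P m -> P (c *: m)) &
      (forall x m, P m -> P (lm_act x m))].

Definition irreducible (M : lmod A) : Prop :=
  (exists m : M, m <> 0) /\
  forall P : M -> Prop, submodule P -> (exists m, P m /\ m <> 0) -> forall m, P m.

Definition inAe (e a : A) : Prop := exists x : A, a = nua_mul x e.

(* Left A-module maps Ae -> N (given by their values on Ae). *)
Definition hom_from_Ae (e : A) (N : lmod A) (f : A -> N) : Prop :=
  (forall (c : K) a b, inAe e a -> inAe e b -> f (c *: a + b) = c *: f a + f b) /\
  (forall x a, inAe e a -> f (nua_mul x a) = lm_act x (f a)).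

Definition hom_to_Ae (e : A) (N : lmod A) (g : N -> A) : Prop :=
  [/\ (forall m, inAe e (g m)), is_linear g &
      (forall x m, g (lm_act x m) = nua_mul x (g m))].

Definition quotient_of_Ae (e : A) (N : lmod A) : Prop :=
  exists f : A -> N, hom_from_Ae e f /\ forall n : N, exists a, inAe e a /\ f a = n.

Definition generating (e : A) : Prop :=
  idempotent e /\
  forall N : lmod A, quasicoherent N -> irreducible N -> quotient_of_Ae e N.

Definition AUF : Prop :=
  exists (J : Type) (ee : J -> A),
  [/\ (forall i, idempotent (ee i)),
      (forall i j, i <> j -> nua_mul (ee i) (ee j) = 0),
      (forall i j, exists (n : nat) (v : 'I_n -> A), forall x : A,
          exists c : 'I_n -> K,
            nua_mul (nua_mul (ee i) x) (ee j) = \sum_(k < n) c k *: v k) &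
      (forall a : A, exists s : seq (J * J * A),
          a = \sum_(t <- s) nua_mul (nua_mul (ee t.1.1) t.2) (ee t.1.2))].

Definition strongly_AUF : Prop := AUF /\ exists e : A, generating e.

Definition projective (M : lmod A) : Prop :=
  forall (X Y : lmod A) (g : X -> Y) (f : M -> Y),
    is_hom g -> (forall y, exists x, g x = y) -> is_hom f ->
    exists h : M -> X, is_hom h /\ forall m, g (h m) = f m.

(* N is a quotient of M^{(+)n} for some n >= 1; a map M^{(+)n} -> N is given by
   its n components M -> N. *)
Definition quotient_of_power (M N : lmod A) : Prop :=
  exists n : nat, (0 < n)%N /\
  exists f : 'I_n -> M -> N, (forall i, is_hom (f i)) /\
    forall y : N, exists xi : 'I_n -> M, \sum_(i < n) f i (xi i) = y.

Definition proj_generator (M : lmod A) : Prop :=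
  [/\ coherent M, projective M & forall N : lmod A, coherent N -> quotient_of_power M N].

Definition SLF_A (psi : A -> K) : Prop :=
  is_linform psi /\ forall x y, psi (nua_mul x y) = psi (nua_mul y x).

Section Endo.
Variable M : lmod A.

Definition is_endo (f : M -> M) : Prop := @is_hom M M f.

Lemma hom_add (f g : M -> M) : is_endo f -> is_endo g -> is_endo (fun m => f m + g m).
Proof.
move=> [lf af] [lg ag]; split.
  by move=> c u v; rewrite lf lg scalerDr addrACA.
by move=> x m; rewrite af ag lm_actDr.
Qed.

Lemma hom_scale (c : K) (f : M -> M) : is_endo f -> is_endo (fun m => c *: f m).
Proof.
move=> [lf af]; split.
  by move=> d u v; rewrite lf scalerDr !scalerA mulrC.
by move=> x m; rewrite af lm_actZr.
Qed.

Lemma hom_comp (f g : M -> M) : is_endo f -> is_endo g -> is_endo (fun m => g (f m)).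
Proof.
move=> [lf af] [lg ag]; split; first by move=> c u v; rewrite lf lg.
by move=> x m; rewrite af ag.
Qed.

Lemma hom_id : is_endo (fun m : M => m).
Proof. by split. Qed.

Lemma hom_zero : is_endo (fun _ : M => 0).
Proof.
split; first by move=> c u v; rewrite scaler0 addr0.
by move=> x m; rewrite -(scale0r (0 : M)) lm_actZr !scale0r.
Qed.

Definition Bend := {f : M -> M | is_endo f}.
Definition addB (y z : Bend) : Bend := exist _ _ (hom_add (svalP y) (svalP z)).
Definition scaleB (c : K) (y : Bend) : Bend := exist _ _ (hom_scale c (svalP y)).
Definition zeroB : Bend := exist _ _ hom_zero.
Definition oneB : Bend := exist _ _ hom_id.
(* product in the opposite algebra: (y z) acts on xi as z (y xi), so that
   xi . (y z) = (xi . y) . z for the right action xi . T = T xi. *)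
Definition mulB (y z : Bend) : Bend := exist _ _ (hom_comp (svalP y) (svalP z)).
Definition ractB (m : M) (y : Bend) : M := sval y m.

Definition SLF_B (phi : Bend -> K) : Prop :=
  (forall (c : K) y z, phi (addB (scaleB c y) z) = c * phi y + phi z) /\
  forall y z, phi (mulB y z) = phi (mulB z y).

Definition rhom_BM (al : Bend -> M) : Prop :=
  (forall (c : K) y z, al (addB (scaleB c y) z) = c *: al y + al z) /\
  (forall y z, al (mulB y z) = ractB (al y) z).
Definition rhom_MB (alc : M -> Bend) : Prop :=
  (forall (c : K) m n, alc (c *: m + n) = addB (scaleB c (alc m)) (alc n)) /\
  (forall m z, alc (ractB m z) = mulB (alc m) z).

Definition left_coord (I : eqType) (al : I -> Bend -> M) (alc : I -> M -> Bend)
  : Prop :=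
  [/\ (forall i, rhom_BM (al i)), (forall i, rhom_MB (alc i)),
      (forall m : M, cofinitely (fun i => alc i m = zeroB) /\
                     fsum (fun i => al i (alc i m)) = m) &
      (forall x : A, cofinitely (fun i =>
          (forall y, lm_act x (al i y) = 0) /\
          (forall m, alc i (lm_act x m) = zeroB)))].

Definition LTr (I : eqType) (al : I -> Bend -> M) (alc : I -> M -> Bend)
  (phi : Bend -> K) : A -> K :=
  fun x => fsum (fun i => phi (alc i (lm_act x (al i oneB)))).

Definition right_coord (n : nat) (e : A) (be : 'I_n -> A -> M)
  (bec : 'I_n -> M -> A) : Prop :=
  [/\ idempotent e, (forall j, hom_from_Ae e (be j)),
      (forall j, hom_to_Ae e (bec j)) &
      (forall m : M, \sum_(j < n) be j (bec j m) = m)].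

Definition RTr (n : nat) (e : A) (be : 'I_n -> A -> M) (bec : 'I_n -> M -> A)
  (psi : A -> K) : Bend -> K :=
  fun y => \sum_(j < n) psi (bec j (ractB (be j e) y)).

End Endo.
End Alg.
End Defs.

(* Main.v *)
Require Import Defs.
From HB Require Import structures.
From mathcomp Require Import all_boot all_order all_algebra.
From mathcomp Require Import reals complex.
From mathcomp Require Import boolp.
From Stdlib Require Import ClassicalEpsilon.
Set Implicit Arguments. Unset Strict Implicit. Unset Printing Implicit Defensive.
Import Order.TTheory GRing.Theory Num.Theory.
Local Open Scope ring_scope.

Section Basics.
Variable K : fieldType.

Lemma lin0 (U V : lmodType K) (f : U -> V) : is_linear f -> f 0 = 0.
Proof.
move=> H; have := H 1 0 0; rewrite !scale1r addr0 => E.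
by apply: (addrI (f 0)); rewrite addr0 -E.
Qed.
Lemma linD (U V : lmodType K) (f : U -> V) : is_linear f -> forall u v, f (u + v) = f u + f v.
Proof. by move=> H u v; have := H 1 u v; rewrite !scale1r. Qed.
Lemma linZ (U V : lmodType K) (f : U -> V) : is_linear f -> forall c u, f (c *: u) = c *: f u.
Proof. by move=> H c u; have := H c u 0; rewrite (lin0 H) !addr0. Qed.
Lemma linS (U V : lmodType K) (f : U -> V) : is_linear f ->
  forall (I : Type) (r : seq I) (P : pred I) (F : I -> U),
  f (\sum_(i <- r | P i) F i) = \sum_(i <- r | P i) f (F i).
Proof. by move=> H I r P F; apply: (big_morph f (linD H) (lin0 H)). Qed.

Lemma lf0 (U : lmodType K) (f : U -> K) : is_linform f -> f 0 = 0.
Proof.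
move=> H; have := H 1 0 0; rewrite scale1r addr0 mul1r => E.
by apply: (addrI (f 0)); rewrite addr0 -E.
Qed.
Lemma lfD (U : lmodType K) (f : U -> K) : is_linform f -> forall u v, f (u + v) = f u + f v.
Proof. by move=> H u v; have := H 1 u v; rewrite !scale1r mul1r. Qed.
Lemma lfZ (U : lmodType K) (f : U -> K) : is_linform f -> forall c u, f (c *: u) = c * f u.
Proof. by move=> H c u; have := H c u 0; rewrite (lf0 H) !addr0. Qed.
Lemma lfS (U : lmodType K) (f : U -> K) : is_linform f ->
  forall (I : Type) (r : seq I) (P : pred I) (F : I -> U),
  f (\sum_(i <- r | P i) F i) = \sum_(i <- r | P i) f (F i).
Proof. by move=> H I r P F; apply: (big_morph f (lfD H) (lf0 H)). Qed.

Lemma sum_cover (I : eqType) (V : nmodType) (F : I -> V) (s1 s2 : seq I) :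
  uniq s1 -> uniq s2 -> (forall i, i \notin s1 -> F i = 0) ->
  (forall i, i \notin s2 -> F i = 0) ->
  \sum_(i <- s1) F i = \sum_(i <- s2) F i.
Proof.
move=> u1 u2 h1 h2.
rewrite (bigID (mem s2)) /= [X in _ + X]big1_seq ?addr0; last first.
  by move=> i /andP[/h2].
rewrite [RHS](bigID (mem s1)) /= [X in _ + X]big1_seq ?addr0; last first.
  by move=> i /andP[/h1].
rewrite -[LHS]big_filter -[RHS]big_filter; apply: perm_big; apply: uniq_perm; rewrite ?filter_uniq //.
by move=> i; rewrite !mem_filter andbC.
Qed.

Lemma fsumE (I : eqType) (V : nmodType) (F : I -> V) (s : seq I) :
  (forall i, i \notin s -> F i = 0) -> fsum F = \sum_(i <- undup s) F i.
Proof.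
move=> hs; rewrite /fsum.
set P := (fun s0 : seq I => uniq s0 /\ (forall i, i \notin s0 -> F i = 0)).
have : P (epsilon (inhabits [::]) P).
  apply: epsilon_spec; exists (undup s); split; first exact: undup_uniq.
  by move=> i; rewrite mem_undup; apply: hs.
case=> u h; apply: sum_cover => //; first exact: undup_uniq.
by move=> i; rewrite mem_undup; apply: hs.
Qed.

End Basics.

Section Alg.
Variables (K : fieldType) (A : nuAlg K).
Local Notation "a ⋅ b" := (nua_mul a b) (at level 40, left associativity).

Lemma mul0a (y : A) : 0 ⋅ y = 0.
Proof. by have := nua_mulZl 0 (0 : A) y; rewrite !scale0r. Qed.
Lemma mula0 (y : A) : y ⋅ 0 = 0.
Proof. by have := nua_mulZr 0 y (0 : A); rewrite !scale0r. Qed.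
Lemma mulsuml (I : Type) (r : seq I) (P : pred I) (F : I -> A) y :
  (\sum_(i <- r | P i) F i) ⋅ y = \sum_(i <- r | P i) (F i ⋅ y).
Proof. by apply: (big_morph (fun x => x ⋅ y) (fun a b => nua_mulDl a b y) (mul0a y)). Qed.
Lemma mulsumr (I : Type) (r : seq I) (P : pred I) (F : I -> A) y :
  y ⋅ (\sum_(i <- r | P i) F i) = \sum_(i <- r | P i) (y ⋅ F i).
Proof. by apply: (big_morph (fun x => y ⋅ x) (fun a b => nua_mulDr y a b) (mula0 y)). Qed.

Variable M : lmod A.
Local Notation "x ▷ m" := (lm_act x m) (at level 40).
Lemma act0l (m : M) : (0 : A) ▷ m = 0.
Proof. by have := lm_actZl 0 (0 : A) m; rewrite !scale0r. Qed.
Lemma act0r (x : A) : x ▷ (0 : M) = 0.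
Proof. by have := lm_actZr 0 x (0 : M); rewrite !scale0r. Qed.
Lemma actsuml (I : Type) (r : seq I) (P : pred I) (F : I -> A) (m : M) :
  (\sum_(i <- r | P i) F i) ▷ m = \sum_(i <- r | P i) (F i ▷ m).
Proof. by apply: (big_morph (fun x => x ▷ m) (fun a b => lm_actDl a b m) (act0l m)). Qed.
Lemma actsumr (I : Type) (r : seq I) (P : pred I) (F : I -> M) (x : A) :
  x ▷ (\sum_(i <- r | P i) F i) = \sum_(i <- r | P i) (x ▷ F i).
Proof. by apply: (big_morph (fun m => x ▷ m) (fun a b => lm_actDr x a b) (act0r x)). Qed.
End Alg.

Section BendSec.
Variables (K : fieldType) (A : nuAlg K) (M : lmod A).
Local Notation "a ⋅ b" := (nua_mul a b) (at level 40, left associativity).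
Local Notation "x ▷ m" := (lm_act x m) (at level 40).

Lemma Bext (y z : Bend M) : (forall m, sval y m = sval z m) -> y = z.
Proof.
case: y z => [fy hy] [fz hz] /= H; have E := funext H; subst fz.
by congr exist; apply: Prop_irrelevance.
Qed.

Lemma endo_lin (y : Bend M) : is_linear (sval y).
Proof. by case: (svalP y). Qed.
Lemma endo_act (y : Bend M) x m : sval y (x ▷ m) = x ▷ sval y m.
Proof. by case: (svalP y) => _ ->. Qed.

Definition sumB (I : Type) (r : seq I) (F : I -> Bend M) : Bend M :=
  foldr (fun i acc => addB (F i) acc) (zeroB M) r.
Lemma sumB_val (I : Type) (r : seq I) (F : I -> Bend M) m :
  sval (sumB r F) m = \sum_(i <- r) sval (F i) m.
Proof. by elim: r => [|i r IH] /=; rewrite ?big_nil ?big_cons //= IH. Qed.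

Section Phi.
Variable phi : Bend M -> K.
Hypothesis hphi : SLF_B phi.
Lemma phi0 : phi (zeroB M) = 0.
Proof.
have := hphi.1 1 (zeroB M) (zeroB M).
have -> : addB (scaleB 1 (zeroB M)) (zeroB M) = zeroB M.
  by apply: Bext => m /=; rewrite scale1r addr0.
by rewrite mul1r => E; apply: (addrI (phi (zeroB M))); rewrite addr0 -E.
Qed.
Lemma phiD y z : phi (addB y z) = phi y + phi z.
Proof.
have := hphi.1 1 y z; have -> : addB (scaleB 1 y) z = addB y z.
  by apply: Bext => m /=; rewrite scale1r.
by rewrite mul1r.
Qed.
Lemma phiZ c y : phi (scaleB c y) = c * phi y.
Proof.
have := hphi.1 c y (zeroB M); have -> : addB (scaleB c y) (zeroB M) = scaleB c y.
  by apply: Bext => m /=; rewrite addr0.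
by rewrite phi0 addr0.
Qed.
Lemma phi_sumB (I : Type) (r : seq I) (F : I -> Bend M) :
  phi (sumB r F) = \sum_(i <- r) phi (F i).
Proof. by elim: r => [|i r IH] /=; rewrite ?big_nil ?big_cons ?phi0 // phiD IH. Qed.
Lemma phiC y z : phi (mulB y z) = phi (mulB z y).
Proof. exact: hphi.2. Qed.
Lemma phi_ext y z : (forall m, sval y m = sval z m) -> phi y = phi z.
Proof. by move=> H; rewrite (Bext H). Qed.
End Phi.

Definition ahom (u : M -> A) := is_linear u /\ forall x m, u (x ▷ m) = x ⋅ u m.

Lemma Yendo (u : M -> A) (hu : ahom u) (eta : M) : is_endo (fun m => u m ▷ eta).
Proof.
case: hu => ul ua; split.
  by move=> c m m'; rewrite ul lm_actDl lm_actZl.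
by move=> x m; rewrite ua lm_actA.
Qed.
Definition YB (u : M -> A) (hu : ahom u) (eta : M) : Bend M := exist _ _ (Yendo hu eta).

Lemma ahom_comp (u : M -> A) (T : Bend M) : ahom u -> ahom (fun m => u (sval T m)).
Proof.
case=> ul ua; split.
  by move=> c m m'; rewrite (endo_lin T) ul.
by move=> x m; rewrite endo_act ua.
Qed.

Lemma mulB_YB (u : M -> A) (hu : ahom u) eta (T : Bend M) :
  mulB T (YB hu eta) = YB (ahom_comp T hu) eta.
Proof. exact: Bext. Qed.

Section RightC.
Variables (n : nat) (e : A) (be : 'I_n -> A -> M) (bec : 'I_n -> M -> A).
Hypothesis hR : right_coord e be bec.

Lemma e_idem : e ⋅ e = e.
Proof. by case: hR. Qed.
Lemma inAe_e : inAe e e.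
Proof. by exists e; rewrite e_idem. Qed.
Lemma be_Ae j a : inAe e a -> be j a = a ▷ be j e.
Proof.
case: hR => _ hb _ _ [x ->].
have H := (hb j).2.
by rewrite (H x e inAe_e) lm_actA -(H e e inAe_e) e_idem.
Qed.
Lemma bec_ahom j : ahom (bec j).
Proof. by case: hR => _ _ hc _; case: (hc j) => _ l a; split. Qed.
Lemma bec_in j m : inAe e (bec j m).
Proof. by case: hR => _ _ hc _; case: (hc j). Qed.
Lemma decomp m : m = \sum_(j < n) bec j m ▷ be j e.
Proof.
case: hR => _ _ _ hs; rewrite -{1}(hs m); apply: eq_bigr => j _.
exact: be_Ae (bec_in j m).
Qed.

Lemma endo_decomp (T : Bend M) m : sval T m = \sum_(j < n) bec j m ▷ sval T (be j e).
Proof.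
rewrite {1}(decomp m) (linS (endo_lin T)); apply: eq_bigr => j _.
by rewrite endo_act.
Qed.

Section Psi.
Variable psi : A -> K.
Hypothesis hpsi : SLF_A psi.

Lemma rank1 (u : M -> A) (hu : ahom u) eta :
  RTr e be bec psi (YB hu eta) = psi (u eta).
Proof.
rewrite /RTr /ractB /=.
case: (hu) => ul ua; case: (hpsi) => pl pc.
under eq_bigr => j _ do rewrite (bec_ahom j).2 pc -ua.
by rewrite -(lfS pl) -(linS ul) -decomp.
Qed.

Lemma RTr_SLF : SLF_B (RTr e be bec psi).
Proof.
case: (hpsi) => pl pc; split.
  move=> c y z; rewrite /RTr /ractB /= mulr_sumr -big_split /=.
  apply: eq_bigr => j _.
  by rewrite (bec_ahom j).1 pl.
move=> y z; rewrite /RTr /ractB /=.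
have E : forall (y z : Bend M) j, psi (bec j (sval z (sval y (be j e)))) =
   \sum_(k < n) psi (bec k (sval y (be j e)) ⋅ bec j (sval z (be k e))).
  move=> y0 z0 j; rewrite (endo_decomp z0) (linS (bec_ahom j).1) (lfS pl).
  by apply: eq_bigr => k _; rewrite (bec_ahom j).2.
under eq_bigr => j _ do rewrite E.
under [RHS]eq_bigr => j _ do rewrite E.
rewrite [RHS]exchange_big /=; apply: eq_bigr => j _; apply: eq_bigr => k _.
exact: pc.
Qed.
End Psi.

Lemma RTr_lin (c : K) psi1 psi2 y :
  RTr e be bec (fun x => c * psi1 x + psi2 x) y
   = c * RTr e be bec psi1 y + RTr e be bec psi2 y.
Proof. by rewrite /RTr mulr_sumr -big_split. Qed.

End RightC.
End BendSec.

Section LeftSec.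
Variables (K : fieldType) (A : nuAlg K) (M : lmod A).
Local Notation "a ⋅ b" := (nua_mul a b) (at level 40, left associativity).
Local Notation "x ▷ m" := (lm_act x m) (at level 40).
Variables (I : eqType) (al : I -> Bend M -> M) (alc : I -> M -> Bend M).
Hypothesis hL : left_coord al alc.

Definition xi i := al i (oneB M).

Lemma al_eq i y : al i y = sval y (xi i).
Proof.
case: hL => ha _ _ _; have := (ha i).2 (oneB M) y.
have -> : mulB (oneB M) y = y by apply: Bext.
by [].
Qed.
Lemma alc_mul i m (z : Bend M) : alc i (sval z m) = mulB (alc i m) z.
Proof. by case: hL => _ hc _ _; exact: (hc i).2. Qed.
Lemma alc_lin i c m m' : alc i (c *: m + m') = addB (scaleB c (alc i m)) (alc i m').
Proof. by case: hL => _ hc _ _; exact: (hc i).1. Qed.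
Lemma alc_pt_lin i p : is_linear (fun m => sval (alc i m) p).
Proof. by move=> c m m'; rewrite alc_lin. Qed.
Lemma phi_alc_lf phi i : SLF_B phi -> is_linform (fun m => phi (alc i m)).
Proof. by move=> hp c m m'; rewrite alc_lin hp.1. Qed.

Lemma asupp m : exists s : seq I, forall i, i \notin s -> alc i m = zeroB M.
Proof. by case: hL => _ _ h _; case: (h m) => [[s hs] _]; exists s. Qed.
Lemma recon m s : (forall i, i \notin s -> alc i m = zeroB M) ->
  \sum_(i <- undup s) sval (alc i m) (xi i) = m.
Proof.
move=> hs; case: hL => _ _ h _; rewrite -[RHS](proj2 (h m)).
rewrite (@fsumE _ _ _ s); first by apply: eq_bigr => i _; rewrite al_eq.
by move=> i /hs ->; rewrite al_eq.
Qed.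
Lemma bsupp x : exists s : seq I, forall i, i \notin s ->
  x ▷ xi i = 0 /\ forall m, alc i (x ▷ m) = zeroB M.
Proof.
case: hL => _ _ _ h; case: (h x) => s hs; exists s => i /hs [h1 h2]; split => //.
exact: h1.
Qed.

Lemma LTrE phi x s : SLF_B phi -> (forall i, i \notin s -> forall m, alc i (x ▷ m) = zeroB M) ->
  LTr al alc phi x = \sum_(i <- undup s) phi (alc i (x ▷ xi i)).
Proof.
move=> hp hs; rewrite /LTr (@fsumE _ _ _ s) //.
by move=> i /hs ->; rewrite phi0.
Qed.

Lemma LTr_SLF phi : SLF_B phi -> SLF_A (LTr al alc phi).
Proof.
move=> hp; split.
  move=> c x x'.
  case: (bsupp x) => s1 h1; case: (bsupp x') => s2 h2.
  have H1 : forall i, i \notin s1 ++ s2 -> forall m, alc i (x ▷ m) = zeroB M.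
    by move=> i; rewrite mem_cat negb_or => /andP[/h1 [_ ?]].
  have H2 : forall i, i \notin s1 ++ s2 -> forall m, alc i (x' ▷ m) = zeroB M.
    by move=> i; rewrite mem_cat negb_or => /andP[_ /h2 [_ ?]].
  have H3 : forall i, i \notin s1 ++ s2 -> forall m, alc i ((c *: x + x') ▷ m) = zeroB M.
    move=> i hi m; rewrite lm_actDl lm_actZl alc_lin; rewrite (H1 i hi) (H2 i hi).
    by apply: Bext => p /=; rewrite scaler0 addr0.
  rewrite (LTrE hp H1) (LTrE hp H2) (LTrE hp H3) mulr_sumr -big_split /=.
  by apply: eq_bigr => i _; rewrite lm_actDl lm_actZl alc_lin hp.1.
move=> x y.
case: (bsupp x) => s1 h1; case: (bsupp y) => s2 h2.
set s := s1 ++ s2.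
have Hx : forall i, i \notin s -> forall m, alc i (x ▷ m) = zeroB M.
  by move=> i; rewrite mem_cat negb_or => /andP[/h1 [_ ?]].
have Hy : forall i, i \notin s -> forall m, alc i (y ▷ m) = zeroB M.
  by move=> i; rewrite mem_cat negb_or => /andP[_ /h2 [_ ?]].
have Hxy : forall (x y : A), (forall i, i \notin s -> forall m, alc i (x ▷ m) = zeroB M) ->
   (forall i, i \notin s -> forall m, alc i (y ▷ m) = zeroB M) ->
   LTr al alc phi (x ⋅ y) = \sum_(i <- undup s) \sum_(k <- undup s)
      phi (mulB (alc i (x ▷ xi k)) (alc k (y ▷ xi i))).
  move=> x0 y0 hx hy.
  have hxy : forall i, i \notin s -> forall m, alc i ((x0 ⋅ y0) ▷ m) = zeroB M.
    by move=> i hi m; rewrite lm_actA hx.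
  rewrite (LTrE hp hxy); apply: eq_bigr => i _.
  rewrite lm_actA -{1}(recon (fun k hk => hy k hk (xi i))) actsumr.
  rewrite (lfS (phi_alc_lf i hp)); apply: eq_bigr => k _.
  by rewrite -endo_act alc_mul.
rewrite (Hxy x y Hx Hy) (Hxy y x Hy Hx) exchange_big /=.
apply: eq_bigr => i _; apply: eq_bigr => k _; exact: phiC.
Qed.

Lemma RTr_LTr n e (be : 'I_n -> A -> M) bec phi y :
  right_coord e be bec -> SLF_B phi ->
  RTr e be bec (LTr al alc phi) y = phi y.
Proof.
move=> hR hp; rewrite /RTr /ractB.
have -> : phi y = phi (sumB (index_enum 'I_n) (fun j => mulB (YB (bec_ahom hR j) (be j e)) y)).
  apply: phi_ext => // m; rewrite sumB_val /= (endo_decomp hR y m).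
  by apply: eq_bigr => j _; rewrite endo_act.
rewrite phi_sumB // ; apply: eq_bigr => j _.
set w := sval y (be j e).
set a := bec j w.
case: (bsupp a) => s1 h1; case: (asupp w) => s2 h2.
have Ha : forall i, i \notin s1 ++ s2 -> forall m, alc i (a ▷ m) = zeroB M.
  by move=> i; rewrite mem_cat negb_or => /andP[/h1 [_ ?]].
have Hw : forall i, i \notin s1 ++ s2 -> alc i w = zeroB M.
  by move=> i; rewrite mem_cat negb_or => /andP[_ /h2].
rewrite (LTrE hp Ha).
have E : forall i, alc i (a ▷ xi i) = mulB (alc i w) (YB (bec_ahom hR j) (xi i)).
  by move=> i; rewrite -alc_mul.
under eq_bigr => i _ do rewrite E phiC //.
rewrite -phi_sumB //; apply: phi_ext => // m.
rewrite sumB_val /=.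
under eq_bigr => i _ do rewrite endo_act.
by rewrite -actsumr (recon Hw) endo_act.
Qed.
Lemma LTr_RTr n e (be : 'I_n -> A -> M) bec psi x :
  right_coord e be bec -> SLF_A psi ->
  (exists (k : nat) (U : 'I_k -> M -> A) (Z : 'I_k -> M),
     (forall l, ahom (U l)) /\ x ⋅ (\sum_(l < k) U l (Z l)) = x) ->
  LTr al alc (RTr e be bec psi) x = psi x.
Proof.
move=> hR hpsi [k [U [Z [hU hx]]]].
have hRS := RTr_SLF hR hpsi.
case: hpsi => pl pc.
case: (bsupp x) => s hs.
have Hx : forall i, i \notin s -> forall m, alc i (x ▷ m) = zeroB M.
  by move=> i /hs [_ ?].
rewrite (LTrE hRS Hx).
have E : forall i, x ▷ xi i = \sum_(l < k) sval (YB (hU l) (xi i)) (x ▷ Z l).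
  move=> i; rewrite -{1}hx lm_actA actsuml actsumr; apply: eq_bigr => l _ /=.
  by rewrite -lm_actA (hU l).2.
under eq_bigr => i _ do rewrite E (lfS (phi_alc_lf i hRS)).
under eq_bigr => i _ do under eq_bigr => l _ do rewrite alc_mul mulB_YB (rank1 hR (conj pl pc)) /=.
rewrite exchange_big /= -[in RHS]hx mulsumr (lfS pl).
apply: eq_bigr => l _.
by rewrite -(lfS pl) -(linS (hU l).1) (recon (fun i hi => Hx i hi (Z l))) (hU l).2.
Qed.
End LeftSec.

Section AUFsec.
Variables (K : fieldType) (A : nuAlg K).
Local Notation "a ⋅ b" := (nua_mul a b) (at level 40, left associativity).
Variables (J : Type) (ee : J -> A).
Hypothesis hid : forall j, ee j ⋅ ee j = ee j.
Hypothesis hor : forall i j, i <> j -> ee i ⋅ ee j = 0.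
Hypothesis hdec : forall a : A, exists s : seq (J * J * A),
  a = \sum_(t <- s) (ee t.1.1 ⋅ t.2) ⋅ ee t.1.2.

Definition J' := {classic J}.
Definition dec (a : A) : seq (J' * J' * A) := proj1_sig (constructive_indefinite_description _ (hdec a)).
Lemma dec_eq a : a = \sum_(t <- dec a) (ee t.1.1 ⋅ t.2) ⋅ ee t.1.2.
Proof. exact: (proj2_sig (constructive_indefinite_description _ (hdec a))). Qed.
Definition lidx a : seq J' := [seq (t.1.1 : J') | t <- dec a].
Definition ridx a : seq J' := [seq (t.1.2 : J') | t <- dec a].
Definition esum (L : seq J') := \sum_(j <- L) ee j.

Lemma esum_l L (j : J') : uniq L -> j \in L -> esum L ⋅ ee j = ee j.
Proof.
move=> u jL; rewrite /esum mulsuml (bigD1_seq j) //= hid big1 ?addr0 //.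
by move=> i /eqP ij; apply: hor.
Qed.
Lemma esum_r L (j : J') : uniq L -> j \in L -> ee j ⋅ esum L = ee j.
Proof.
move=> u jL; rewrite /esum mulsumr (bigD1_seq j) //= hid big1 ?addr0 //.
by move=> i /eqP ij; apply: hor => E; apply: ij.
Qed.
Lemma esum_idem L : uniq L -> esum L ⋅ esum L = esum L.
Proof.
move=> u; rewrite {2}/esum mulsumr [RHS]/esum.
by apply: eq_big_seq => j jL; rewrite (esum_l u jL).
Qed.

Lemma left_unit L a : uniq L -> {subset lidx a <= L} -> esum L ⋅ a = a.
Proof.
rewrite /lidx => uL; have := dec_eq a; move: (dec a) => d Ed sub.
rewrite Ed mulsumr; apply: eq_big_seq => t td.
by rewrite !nua_mulA esum_l //; apply: sub; apply: (map_f (fun t : J' * J' * A => (t.1.1 : J'))).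
Qed.
Lemma right_unit L a : uniq L -> {subset ridx a <= L} -> a ⋅ esum L = a.
Proof.
rewrite /ridx => uL; have := dec_eq a; move: (dec a) => d Ed sub.
rewrite Ed mulsuml; apply: eq_big_seq => t td.
rewrite -nua_mulA esum_r //; apply: sub; exact: (map_f (fun t : J' * J' * A => (t.1.2 : J'))).
Qed.
Lemma left_zero (j : J') a : j \notin lidx a -> ee j ⋅ a = 0.
Proof.
rewrite /lidx; have := dec_eq a; move: (dec a) => d Ed nj.
rewrite Ed mulsumr big1_seq // => t [] td.
rewrite !nua_mulA hor ?mul0a //.
move=> E; move: nj; rewrite E.
by rewrite (map_f (fun t : J' * J' * A => (t.1.1 : J'))).
Qed.
Lemma right_zero (j : J') a : j \notin ridx a -> a ⋅ ee j = 0.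
Proof.
rewrite /ridx; have := dec_eq a; move: (dec a) => d Ed nj.
rewrite Ed mulsuml big1_seq // => t [] td.
rewrite -nua_mulA hor ?mula0 //.
move=> E; move: nj; rewrite -E.
by rewrite (map_f (fun t : J' * J' * A => (t.1.2 : J'))).
Qed.

Lemma units (s : seq A) : exists p : A, p ⋅ p = p /\
  forall a, a \in s -> p ⋅ a = a /\ a ⋅ p = a.
Proof.
pose L := undup (flatten [seq lidx a ++ ridx a | a <- s]).
have uL : uniq L by exact: undup_uniq.
exists (esum L); split; first exact: esum_idem.
move=> a aS; split.
  apply: left_unit => // j jl; rewrite mem_undup; apply/flatten_mapP.
  by exists a => //; rewrite mem_cat jl.
apply: right_unit => // j jl; rewrite mem_undup; apply/flatten_mapP.
by exists a => //; rewrite mem_cat jl orbT.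
Qed.
End AUFsec.

Section SubA.
Variables (K : fieldType) (A : nuAlg K) (f : A).
Definition inAf : pred A := fun a => nua_mul a f == a.
Lemma inAf_closed : subsemimod_closed inAf.
Proof.
split; [split|].
- by rewrite unfold_in /inAf /= mul0a.
- move=> u v; rewrite !unfold_in /inAf /= => /eqP Hu /eqP Hv; by rewrite nua_mulDl Hu Hv.
- by move=> c u; rewrite !unfold_in /inAf /= => /eqP Hu; rewrite nua_mulZl Hu.
Qed.
HB.instance Definition _ := GRing.isSubmodClosed.Build K A inAf inAf_closed.
Definition Af := {a : A | inAf a}.
HB.instance Definition _ := [isSub of Af for (@sval A inAf)].
HB.instance Definition _ := [Choice of Af by <:].
HB.instance Definition _ := [SubChoice_isSubLmodule of Af by <:].
Lemma valL (a b : Af) (c : K) : val (c *: a + b) = c *: val a + val b.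
Proof. rewrite raddfD /=; congr (_ + _); exact: SubK. Qed.
Lemma valS (I : Type) (r : seq I) (F : I -> Af) : val (\sum_(i <- r) F i) = \sum_(i <- r) val (F i).
Proof. by rewrite raddf_sum. Qed.
End SubA.

Section Gen.
Variables (K : fieldType) (A : nuAlg K) (M : lmod A).
Local Notation "a ⋅ b" := (nua_mul a b) (at level 40, left associativity).
Local Notation "x ▷ m" := (lm_act x m) (at level 40).
Hypothesis hunit : forall a : A, exists p : A, p ⋅ a = a.
Hypothesis hM : proj_generator M.
Variable f : A.
Hypothesis hf : f ⋅ f = f.

Lemma actP (x : A) (a : Af f) : inAf f (x ⋅ val a).
Proof.
rewrite /inAf /=; apply/eqP; rewrite -nua_mulA.
by have /eqP -> := valP a.
Qed.
Definition actAf (x : A) (a : Af f) : Af f := Sub (x ⋅ val a) (actP x a).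
Lemma actAf_val x a : val (actAf x a) = x ⋅ val a.
Proof. exact: SubK. Qed.

Lemma actAf_A x y a : actAf (x ⋅ y) a = actAf x (actAf y a).
Proof. by apply: val_inj; rewrite !actAf_val nua_mulA. Qed.
Lemma actAf_Dl x y a : actAf (x + y) a = actAf x a + actAf y a.
Proof. by apply: val_inj; rewrite [RHS]raddfD !actAf_val nua_mulDl. Qed.
Lemma actAf_Dr x a b : actAf x (a + b) = actAf x a + actAf x b.
Proof. by apply: val_inj; rewrite [RHS]raddfD !actAf_val [val (a + b)]raddfD nua_mulDr. Qed.
Lemma valZ c (a : Af f) : val (c *: a) = c *: val a.
Proof. exact: SubK. Qed.
Lemma actAf_Zl c x a : actAf (c *: x) a = c *: actAf x a.
Proof. by apply: val_inj; rewrite valZ !actAf_val nua_mulZl. Qed.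
Lemma actAf_Zr c x a : actAf x (c *: a) = c *: actAf x a.
Proof. by apply: val_inj; rewrite valZ !actAf_val valZ nua_mulZr. Qed.

Definition NAf : lmod A := @LMod K A (Af f) actAf actAf_A actAf_Dl actAf_Dr actAf_Zl actAf_Zr.

Lemma f_in : inAf f f.
Proof. by rewrite /inAf hf. Qed.
Definition f0 : Af f := Sub f f_in.

Lemma NAf_coh : coherent NAf.
Proof.
split.
  move=> a; case: (hunit (val a)) => p hp; exists p.
  by apply: val_inj; rewrite /= ?actAf_val hp.
exists 1%N, (fun _ => f0) => m; exists (fun _ => 0), (fun _ => val m).
rewrite big_ord1 scale0r add0r; apply: val_inj => /=.
by rewrite ?actAf_val ?SubK; have /eqP -> := valP m.
Qed.

Lemma gen : exists (k : nat) (U : 'I_k -> M -> A) (Z : 'I_k -> M),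
  [/\ (forall l, ahom (U l)), (forall l m, U l m ⋅ f = U l m) &
      \sum_(l < k) U l (Z l) = f].
Proof.
case: hM => _ _ /(_ NAf NAf_coh) [k [_ [F [hF hs]]]].
case: (hs f0) => z hz.
exists k, (fun l m => val (F l m)), z; split.
- move=> l; split.
    by move=> c m m'; rewrite (hF l).1 valL.
  by move=> x m; rewrite (hF l).2 /= ?actAf_val.
- by move=> l m; have /eqP := valP (F l m).
- by rewrite -valS hz SubK.
Qed.
End Gen.

Section RightEx.
Variables (K : fieldType) (A : nuAlg K) (M : lmod A).
Local Notation "a ⋅ b" := (nua_mul a b) (at level 40, left associativity).
Local Notation "x ▷ m" := (lm_act x m) (at level 40).
Hypothesis hunits : forall s : seq A, exists p : A, p ⋅ p = p /\
  forall a, a \in s -> p ⋅ a = a /\ a ⋅ p = a.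
Hypothesis hM : proj_generator M.
Variable n : nat.

Lemma ffD (v w : {ffun 'I_n -> A}) k : (v + w) k = v k + w k.
Proof. by rewrite ffunE. Qed.
Lemma ffZ c (v : {ffun 'I_n -> A}) k : (c *: v) k = c *: v k.
Proof. by rewrite ffunE. Qed.

Definition actX (x : A) (v : {ffun 'I_n -> A}) : {ffun 'I_n -> A} := [ffun k => x ⋅ v k].
Lemma actX_A x y v : actX (x ⋅ y) v = actX x (actX y v).
Proof. by apply/ffunP => k; rewrite !ffunE nua_mulA. Qed.
Lemma actX_Dl x y v : actX (x + y) v = actX x v + actX y v.
Proof. by apply/ffunP => k; rewrite !ffunE nua_mulDl. Qed.
Lemma actX_Dr x v w : actX x (v + w) = actX x v + actX x w.
Proof. by apply/ffunP => k; rewrite !ffunE nua_mulDr. Qed.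
Lemma actX_Zl c x v : actX (c *: x) v = c *: actX x v.
Proof. by apply/ffunP => k; rewrite !ffunE nua_mulZl. Qed.
Lemma actX_Zr c x v : actX x (c *: v) = c *: actX x v.
Proof. by apply/ffunP => k; rewrite !ffunE nua_mulZr. Qed.
Definition Xmod : lmod A := @LMod K A {ffun 'I_n -> A} actX actX_A actX_Dl actX_Dr actX_Zl actX_Zr.
End RightEx.

Section RightEx2.
Variables (K : fieldType) (A : nuAlg K) (M : lmod A).
Local Notation "a ⋅ b" := (nua_mul a b) (at level 40, left associativity).
Local Notation "x ▷ m" := (lm_act x m) (at level 40).
Hypothesis hunits : forall s : seq A, exists p : A, p ⋅ p = p /\
  forall a, a \in s -> p ⋅ a = a /\ a ⋅ p = a.
Hypothesis hM : proj_generator M.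

Lemma right_exists : exists (n : nat) (e : A) (be : 'I_n -> A -> M) (bec : 'I_n -> M -> A),
  right_coord e be bec.
Proof.
case: hM => [[hq [n [g hg]]] hproj _].
pose y i := proj1_sig (constructive_indefinite_description _ (hq (g i))).
have Ey i : y i ▷ g i = g i := proj2_sig (constructive_indefinite_description _ (hq (g i))).
case: (hunits [seq y i | i <- enum 'I_n]) => p [pp hp].
have pg i : p ▷ g i = g i.
  rewrite -{1}(Ey i) -lm_actA (proj1 (hp (y i) _)) ?Ey //.
  by apply: map_f; rewrite mem_enum.
pose G (v : Xmod A n) : M := \sum_(k < n) v k ▷ g k.
have hG : is_hom G.
  split.
    move=> c v w; rewrite /G scaler_sumr -big_split /=; apply: eq_bigr => k _.
    by rewrite ffD ffZ lm_actDl lm_actZl.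
  move=> x v; rewrite /G actsumr; apply: eq_bigr => k _ /=.
  by rewrite ffunE lm_actA.
have hGs : forall m : M, exists v : Xmod A n, G v = m.
  move=> m; case: (hg m) => c [x ->].
  exists [ffun i => c i *: y i + x i]; rewrite /G; apply: eq_bigr => i _.
  by rewrite ffunE lm_actDl lm_actZl Ey.
have hid : is_hom (fun m : M => m) by split.
case: (hproj (Xmod A n) M G (fun m => m) hG hGs hid) => h [[hl ha] hh].
exists n, p, (fun k a => a ▷ g k), (fun k m => h m k ⋅ p); split => //.
- move=> k; split.
    by move=> c a b _ _; rewrite lm_actDl lm_actZl.
  by move=> x a _; rewrite lm_actA.
- move=> k; split.
  + by move=> m; exists (h m k).
  + by move=> c m m'; rewrite hl ffD ffZ nua_mulDl nua_mulZl.
  + by move=> x m; rewrite ha /= ffunE nua_mulA.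
- move=> m; rewrite -[RHS]hh /G; apply: eq_bigr => k _.
  by rewrite lm_actA pg.
Qed.
End RightEx2.

Section LeftEx.
Variables (K : fieldType) (A : nuAlg K) (M : lmod A).
Local Notation "a ⋅ b" := (nua_mul a b) (at level 40, left associativity).
Local Notation "x ▷ m" := (lm_act x m) (at level 40).
Variables (J : Type) (ee : J -> A).
Hypothesis hid : forall j, ee j ⋅ ee j = ee j.
Hypothesis hor : forall i j, i <> j -> ee i ⋅ ee j = 0.
Hypothesis hdec : forall a : A, exists s : seq (J * J * A),
  a = \sum_(t <- s) (ee t.1.1 ⋅ t.2) ⋅ ee t.1.2.
Hypothesis hM : proj_generator M.

Record gdata := GD { gk : nat; gU : 'I_gk -> M -> A; gZ : 'I_gk -> M }.
Arguments gU : clear implicits.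
Arguments gZ : clear implicits.
Definition gok (f : A) (d : gdata) :=
  [/\ (forall l, ahom (gU d l)), (forall l m, gU d l m ⋅ f = gU d l m) &
      \sum_(l < gk d) gU d l (gZ d l) = f].

Lemma hunit1 : forall a : A, exists p : A, p ⋅ a = a.
Proof.
move=> a; case: (units hid hor hdec [:: a]) => p [_ hp].
by exists p; case: (hp a (mem_head _ _)).
Qed.

Lemma gex (j : J) : exists d, gok (ee j) d.
Proof.
case: (gen hunit1 hM (hid j)) => k [U [Z [h1 h2 h3]]].
by exists (GD U Z).
Qed.

Definition D (j : J) : gdata := proj1_sig (constructive_indefinite_description _ (gex j)).
Lemma HD j : gok (ee j) (D j).
Proof. exact: (proj2_sig (constructive_indefinite_description _ (gex j))). Qed.

Local Notation Iidx := {classic {j : J' J & 'I_(gk (D j))}}.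
Definition U' (i : Iidx) := gU (D (tag i)) (tagged i).
Definition Z' (i : Iidx) := gZ (D (tag i)) (tagged i).
Lemma hU i : ahom (U' i).
Proof. by case: (HD (tag i)) => h _ _; apply: h. Qed.
Lemma hUf i m : U' i m ⋅ ee (tag i) = U' i m.
Proof. by case: (HD (tag i)) => _ h _; apply: h. Qed.
Definition xi' (i : Iidx) := ee (tag i) ▷ Z' i.
Definition alL (i : Iidx) (y : Bend M) : M := sval y (xi' i).
Definition alcL (i : Iidx) (z : M) : Bend M := YB (hU i) z.

Definition sL (L : seq (J' J)) : seq Iidx :=
  [seq (@Tagged (J' J) j (fun j0 : J' J => 'I_(gk (D j0))) k : Iidx) | j : J' J <- L, k <- index_enum 'I_(gk (D j))].

Lemma sL_mem L (i : Iidx) : tag i \in L -> i \in sL L.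
Proof.
move=> iL; rewrite /sL; apply/flatten_mapP; exists (tag i) => //.
case: i iL => j k /= _; apply/mapP; exists k => //; exact: mem_index_enum.
Qed.
Lemma sL_uniq L : uniq L -> uniq (sL L).
Proof.
rewrite /sL; elim: L => [|j L IH] //= /andP[jL uL].
rewrite cat_uniq IH // andbT; apply/andP; split.
  rewrite map_inj_uniq ?index_enum_uniq // => k1 k2; exact: eq_from_Tagged.
apply/hasPn => i /flatten_mapP [j' j'L] /mapP [k _ ->]; apply/negP => /mapP [k' _ E].
have := congr1 (fun u : Iidx => tag u) E => /= Ej; move: jL; rewrite -Ej.
by rewrite j'L.
Qed.

Lemma left_exists : exists (I : eqType) (al : I -> Bend M -> M) (alc : I -> M -> Bend M),
  left_coord al alc.
Proof.
case: (hM) => [[hq _] _ _].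
exists (Iidx : eqType), alL, alcL; split.
- by move=> i; split.
- move=> i; split.
    by move=> c m m'; apply: Bext => p /=; rewrite lm_actDr lm_actZr.
  by move=> m z; apply: Bext => p /=; rewrite endo_act.
- move=> z; case: (hq z) => w hw.
  pose L := undup (lidx hdec w).
  have uL : uniq L := undup_uniq _.
  have Z0 : forall i, i \notin sL L -> alcL i z = zeroB M.
    move=> i hi; have jn : tag i \notin lidx hdec w.
      by apply: (contraNN _ hi) => h; apply: sL_mem; rewrite mem_undup.
    apply: Bext => p /=; rewrite -hw -(hUf i p) lm_actA -(lm_actA (ee _) w).
    by rewrite left_zero // act0l act0r.
  split; first by exists (sL L).
  rewrite (@fsumE _ _ _ (sL L)); last by move=> i /Z0 ->.
  rewrite undup_id; last exact: sL_uniq.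
  rewrite big_allpairs_dep /=.
  have E : forall j : J' J, \sum_(k <- index_enum 'I_(gk (D j)))
      sval (alcL (Tagged (fun j => 'I_(gk (D j))) k : Iidx) z)
           (xi' (Tagged (fun j => 'I_(gk (D j))) k : Iidx)) = ee j ▷ z.
    move=> j; rewrite /= /xi' /U' /Z' /=.
    case: (HD j) => hU1 _ hs.
    under eq_bigr => k _ do rewrite (hU1 k).2.
    by rewrite -actsuml -mulsumr hs hid.
  under eq_bigr => j _ do rewrite E.
  have LU : (\sum_(j <- L) ee j) ⋅ w = w.
    by apply: (left_unit hid hor) => // j jw; rewrite mem_undup.
  by rewrite -actsuml -{1}hw -lm_actA LU hw.
- move=> x; pose L := undup (lidx hdec x ++ ridx hdec x).
  exists (sL L) => i hi.
  have jn : tag i \notin L by apply: (contraNN _ hi) => /sL_mem.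
  have jl : tag i \notin lidx hdec x.
    by apply: (contraNN _ jn) => h; rewrite mem_undup mem_cat h.
  have jr : tag i \notin ridx hdec x.
    by apply: (contraNN _ jn) => h; rewrite mem_undup mem_cat h orbT.
  split.
    move=> y; rewrite /alL /xi' -endo_act -lm_actA right_zero // act0l.
    exact: lin0 (endo_lin y).
  move=> m; apply: Bext => p /=.
  rewrite -(hUf i p) -lm_actA -nua_mulA. by rewrite (@left_zero _ _ _ ee hor hdec (tag i) x jl) mula0 act0l.
Qed.
End LeftEx.

Theorem theorem9p4 (R : realType) (A : nuAlg R[i]) (M : lmod A) :
  strongly_AUF A -> proj_generator M ->
  [/\ (exists (I : eqType) (al : I -> Bend M -> M) (alc : I -> M -> Bend M),
          left_coord al alc),
      (exists (n : nat) (e : A) (be : 'I_n -> A -> M) (bec : 'I_n -> M -> A),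
          right_coord e be bec) &
      forall (I : eqType) (al : I -> Bend M -> M) (alc : I -> M -> Bend M)
             (n : nat) (e : A) (be : 'I_n -> A -> M) (bec : 'I_n -> M -> A),
        left_coord al alc -> right_coord e be bec ->
        [/\ (forall psi, SLF_A psi -> SLF_B (RTr e be bec psi)),
            (forall phi, SLF_B phi -> SLF_A (LTr al alc phi)),
            (forall (c : R[i]) psi1 psi2, SLF_A psi1 -> SLF_A psi2 ->
               forall y, RTr e be bec (fun x => c * psi1 x + psi2 x) y
                         = c * RTr e be bec psi1 y + RTr e be bec psi2 y),
            (forall psi, SLF_A psi ->
               forall x, LTr al alc (RTr e be bec psi) x = psi x) &
            (forall phi, SLF_B phi ->
               forall y, RTr e be bec (LTr al alc phi) y = phi y)]].
Proof.
move=> [[J [ee [hid hor _ hdec]]] _] hM.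
have hunits := units hid hor hdec.
split.
- exact: (left_exists hid hor hdec hM).
- exact: (right_exists hunits hM).
- move=> I al alc n e be bec hL hR; split.
  + by move=> psi hpsi; apply: RTr_SLF.
  + by move=> phi hphi; apply: LTr_SLF.
  + by move=> c psi1 psi2 _ _ y; apply: RTr_lin.
  + move=> psi hpsi x; apply: (LTr_RTr hL hR hpsi).
    case: (hunits [:: x]) => p [pp hp].
    have [_ xp] := hp x (mem_head _ _).
    have hunit1' : forall a : A, exists p : A, nua_mul p a = a.
      move=> a; case: (hunits [:: a]) => q [_ hq].
      by exists q; case: (hq a (mem_head _ _)).
    case: (gen hunit1' hM pp) => k [U [Z [h1 _ h3]]].
    by exists k, U, Z; split => //; rewrite h3.
  + by move=> phi hphi y; apply: RTr_LTr.
Qed.
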